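(* Let $\lambda$ be a partition of $n$ with largest part $\lambda_1$, and let $m\ge n-(\lambda_1-1)$. Then there is a bijection between $\mathrm{QYT}_{\le m}(\lambda)$ and the set $\mathrm{SYT}(\lambda)$ of standard Young tableaux of shape $\lambda$; in particular $|\mathrm{QYT}_{\le m}(\lambda)|=|\mathrm{SYT}(\lambda)|$.
   Context: A partition $\lambda=(\lambda_1\ge\lambda_2\ge\cdots\ge\lambda_k>0)$ of $n$ has length $\ell(\lambda)=k$ and size $n=\sum_i\lambda_i$. Its (French) Young diagram has $\lambda_j$ left-justified boxes in row $j$, rows numbered from bottom to top. A semistandard Young tableau (SSYT) of shape $\lambda$ is a filling of the boxes with positive integers that weakly increase from left to right along rows and strictly increase from bottom to top along columns. A standard Young tableau of shape $\lambda$ is an SSYT using each of $1,\dots,n$ exactly once. An SSYT $T$ is quasi-Yamanouchi if for every integer $i>1$ that appears in $T$, the leftmost occurrence of $i$ lies in a column weakly left of (i.e. with column index $\le$ that of) some occurrence of $i-1$ in $T$. $\mathrm{QYT}_{\le m}(\lambda)$ denotes the set of quasi-Yamanouchi tableaux of shape $\lambda$ all of whose entries are at most $m$. *)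

(* Defs.v *)
From mathcomp Require Import all_boot.
Set Implicit Arguments. Unset Strict Implicit. Unset Printing Implicit Defensive.

Definition is_partition (la : seq nat) : bool :=
  sorted geq la && all (fun p => 0 < p) la.

(* A tableau (French convention) is a sequence of rows, row 0 being the
   bottom row; the entry in row r and column c is [entry T r c]. *)
Definition tableau := seq (seq nat).

Definition entry (T : tableau) (r c : nat) : nat := nth 0 (nth [::] T r) c.

Definition has_shape (la : seq nat) (T : tableau) : bool :=
  map size T == la.

Definition is_box (T : tableau) (r c : nat) : Prop :=
  r < size T /\ c < size (nth [::] T r).

Definition is_SSYT (la : seq nat) (T : tableau) : Prop :=
  [/\ has_shape la T,
      (forall r c, is_box T r c -> 0 < entry T r c),
      (forall r c, is_box T r c.+1 -> entry T r c <= entry T r c.+1) &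
      (forall r c, is_box T r.+1 c -> entry T r c < entry T r.+1 c)].

Definition is_SYT (la : seq nat) (T : tableau) : Prop :=
  is_SSYT la T /\ perm_eq (flatten T) (iota 1 (sumn la)).

Definition appears (T : tableau) (i : nat) : Prop :=
  exists r c, is_box T r c /\ entry T r c = i.

Definition is_quasi_yamanouchi (T : tableau) : Prop :=
  forall i, 1 < i -> appears T i ->
    exists r c,
      [/\ is_box T r c, entry T r c = i,
          (forall r2 c2, is_box T r2 c2 -> entry T r2 c2 = i -> c <= c2) &
          exists r' c', [/\ is_box T r' c', entry T r' c' = i.-1 & c <= c']].

Definition is_QYT_le (m : nat) (la : seq nat) (T : tableau) : Prop :=
  [/\ is_SSYT la T, is_quasi_yamanouchi T &
      (forall r c, is_box T r c -> entry T r c <= m)].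

(* Main.v *)
Require Import Defs.
From mathcomp Require Import all_boot zify.
From Stdlib Require Import ProofIrrelevance.
Set Implicit Arguments. Unset Strict Implicit. Unset Printing Implicit Defensive.

Section Infra.
Variable la : seq nat.

Definition incell (x : nat * nat) : bool := (x.1 < size la) && (x.2 < nth 0 la x.1).
Definition cells : seq (nat * nat) :=
  [seq (r, c) | r <- iota 0 (size la), c <- iota 0 (nth 0 la r)].
Definition mk (f : nat * nat -> nat) : tableau :=
  [seq [seq f (r, c) | c <- iota 0 (nth 0 la r)] | r <- iota 0 (size la)].
Definition ent (T : tableau) (x : nat * nat) : nat := entry T x.1 x.2.

Lemma mem_cells x : (x \in cells) = incell x.
Proof.
apply/allpairsPdep/idP.
  case=> r [c [Hr Hc ->]]; move: Hr Hc; rewrite !mem_iota /incell /= !add0n.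
  by move=> -> ->.
case: x => r c /andP [/= Hr Hc]; exists r, c; split=> //; by rewrite mem_iota.
Qed.

Lemma uniq_cells : uniq cells.
Proof.
apply: allpairs_uniq_dep; first exact: iota_uniq.
  by move=> r _; exact: iota_uniq.
by move=> [a b] [a' b'] _ _ /= [E1]; subst a' => ->.
Qed.

Lemma size_cells : size cells = sumn la.
Proof.
rewrite size_allpairs_dep.
rewrite (eq_map (fun r => size_iota 0 (nth 0 la r))).
by rewrite -/(mkseq _ _) mkseq_nth.
Qed.

Lemma size_mk f : size (mk f) = size la.
Proof. by rewrite size_map size_iota. Qed.

Lemma nth_mk f r : r < size la ->
  nth [::] (mk f) r = [seq f (r, c) | c <- iota 0 (nth 0 la r)].
Proof. by move=> Hr; rewrite (nth_map 0) ?size_iota // nth_iota. Qed.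

Lemma shape_mk f : has_shape la (mk f).
Proof.
apply/eqP; rewrite -map_comp.
rewrite (eq_map (g := nth 0 la)); first by rewrite -/(mkseq _ _) mkseq_nth.
by move=> r /=; rewrite size_map size_iota.
Qed.

Lemma shape_box T r c : has_shape la T -> is_box T r c <-> incell (r, c).
Proof.
move/eqP=> HT; rewrite /is_box /incell /= -HT size_map.
split.
  by case=> Hr Hc; rewrite Hr /= (nth_map [::]).
by move/andP=> [Hr]; rewrite (nth_map [::]).
Qed.

Lemma ent_mk f x : incell x -> ent (mk f) x = f x.
Proof.
case: x => r c /andP [/= Hr Hc].
by rewrite /ent /entry /= nth_mk // (nth_map 0) ?size_iota // nth_iota.
Qed.

Lemma mk_ent T : has_shape la T -> mk (ent T) = T.
Proof.
move=> HT; have HT' := HT; move/eqP: HT' => HT'.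
have Hs : size T = size la by rewrite -HT' size_map.
apply: (eq_from_nth (x0 := [::])); first by rewrite size_mk Hs.
move=> r; rewrite size_mk => Hr; rewrite nth_mk //.
have Hsr : size (nth [::] T r) = nth 0 la r by rewrite -HT' (nth_map [::]) // Hs.
apply: (eq_from_nth (x0 := 0)); first by rewrite size_map size_iota.
move=> c; rewrite size_map size_iota => Hc.
by rewrite (nth_map 0) ?size_iota // nth_iota.
Qed.

Lemma mk_eq f1 f2 : {in incell, f1 =1 f2} -> mk f1 = mk f2.
Proof.
move=> H; apply/eq_in_map => r; rewrite mem_iota => /andP [_ Hr].
apply/eq_in_map => c; rewrite mem_iota => /andP [_ Hc].
by apply: H; rewrite /in_mem /= /incell /= Hr.
Qed.

Lemma flatten_mk f : flatten (mk f) = map f cells.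
Proof.
by rewrite /cells map_flatten -map_comp; congr flatten; apply: eq_map => r /=; rewrite -map_comp.
Qed.

End Infra.

Lemma count_le_in (T : eqType) (a b : pred T) s :
  {in s, forall w, a w -> b w} -> count a s <= count b s.
Proof.
elim: s => [|x s IH] H //=.
have H1 : a x -> b x by apply: H; rewrite inE eqxx.
have H2 : count a s <= count b s by apply: IH => w ws; apply: H; rewrite inE ws orbT.
by case: (a x) (b x) H1 => [] [] //= H1; try (by have := H1 isT); lia.
Qed.

Lemma count_lt_in (T : eqType) (a b : pred T) s :
  {in s, forall w, a w -> b w} -> (exists2 w, w \in s & b w && ~~ a w) ->
  count a s < count b s.
Proof.
elim: s => [|x s IH] H [w]; first by [].
have H1 : a x -> b x by apply: H; rewrite inE eqxx.
have H2 : {in s, forall w, a w -> b w} by move=> u us; apply: H; rewrite inE us orbT.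
rewrite inE => /orP [/eqP -> | ws] Hw /=.
  by have := count_le_in H2; case/andP: Hw => -> /negbTE -> /=; lia.
have := IH H2 (ex_intro2 _ _ w ws Hw).
by case: (a x) (b x) H1 => [] [] //= H1; try (by have := H1 isT); lia.
Qed.

Lemma uniq_map_inj (T1 T2 : eqType) (f : T1 -> T2) s :
  uniq (map f s) -> {in s &, injective f}.
Proof.
elim: s => [|a s IH] //= /andP [Ha Hs] x y.
rewrite !inE => /orP [/eqP -> | xs] /orP [/eqP -> | ys] // E.
- by move: Ha; rewrite E map_f.
- by move: Ha; rewrite -E map_f.
- exact: IH.
Qed.

Lemma count_iota_lt v a k :
  count (fun j => j < v) (iota a k) = minn k (v - a).
Proof.
elim: k a => [|k IH] a /=; first by rewrite min0n.
rewrite IH; case: (ltnP a v) => H; lia.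
Qed.

Lemma count_upper la : count (fun z => 0 < z.1) (cells la) = sumn la - head 0 la.
Proof.
case: la => [|a l] //.
rewrite /cells /= count_cat count_map.
rewrite (eq_count (a2 := pred0)) // count_pred0 add0n.
rewrite (eq_in_count (a2 := predT)) ?count_predT ?size_allpairs_dep; last first.
  by move=> z /allpairsPdep [r [c [Hr _ ->]]]; move: Hr; rewrite mem_iota /=; lia.
rewrite (iotaDl 1 0) -map_comp.
rewrite (eq_map (g := nth 0 l)); first by rewrite -/(mkseq _ _) mkseq_nth addKn.
by move=> r /=; rewrite size_iota.
Qed.

Section Core.
Variable la : seq nat.
Hypothesis Hla : is_partition la.
Local Notation incell := (incell la).
Local Notation cells := (cells la).
Local Notation n := (sumn la).

Lemma incell_down r r' c : incell (r, c) -> r' <= r -> incell (r', c).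
Proof.
move=> /andP [/= Hr Hc] Hr'.
have Hr'' : r' < size la by apply: leq_ltn_trans Hr' Hr.
apply/andP; split => //=.
case/andP: Hla => Hs _.
have Htr : transitive geq by move=> a b d /= H1 H2; exact: leq_trans H2 H1.
have := sorted_leq_nth Htr (fun x => leqnn x) 0 Hs.
move=> /(_ r' r Hr'' Hr Hr') /= Hle.
exact: leq_trans Hc Hle.
Qed.

Lemma incell_left r c c' : incell (r, c) -> c' <= c -> incell (r, c').
Proof. by move=> /andP [/= Hr Hc] Hc'; apply/andP; split => //=; apply: leq_ltn_trans Hc' Hc. Qed.

Definition ssyt (f : nat * nat -> nat) :=
  [/\ forall x, incell x -> 0 < f x,
      forall r c, incell (r, c.+1) -> f (r, c) <= f (r, c.+1) &
      forall r c, incell (r.+1, c) -> f (r, c) < f (r.+1, c)].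

Lemma row_mono f r c1 c2 : ssyt f -> incell (r, c2) -> c1 <= c2 -> f (r, c1) <= f (r, c2).
Proof.
case=> _ Hrow _; elim: c2 => [|c2 IH] Hc; first by rewrite leqn0 => /eqP ->.
rewrite leq_eqVlt => /orP [/eqP -> // | Hlt].
apply: leq_trans (Hrow _ _ Hc); apply: IH => //; exact: incell_left Hc _.
Qed.

Lemma col_mono f r1 r2 c : ssyt f -> incell (r2, c) -> r1 <= r2 -> f (r1, c) + (r2 - r1) <= f (r2, c).
Proof.
case=> _ _ Hcol; elim: r2 => [|r2 IH] Hc; first by rewrite leqn0 => /eqP ->; rewrite subnn addn0.
rewrite leq_eqVlt => /orP [/eqP -> | Hlt]; first by rewrite subnn addn0.
have := Hcol _ _ Hc; have := IH (incell_down Hc (leqnSn r2)) Hlt; lia.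
Qed.

Lemma mono f x y : ssyt f -> incell y -> x.1 <= y.1 -> x.2 <= y.2 -> f x + (y.1 - x.1) <= f y.
Proof.
case: x y => [a b] [a' b'] /= Hf Hy Ha Hb.
have Hc : incell (a, b') := incell_down Hy Ha.
have := row_mono Hf Hc Hb; have := col_mono Hf Hy Ha; lia.
Qed.

Lemma mono_le f x y : ssyt f -> incell y -> x.1 <= y.1 -> x.2 <= y.2 -> f x <= f y.
Proof. by move=> Hf Hy Ha Hb; have := mono Hf Hy Ha Hb; lia. Qed.

Lemma mono_lt f x y : ssyt f -> incell y -> x.1 < y.1 -> x.2 <= y.2 -> f x < f y.
Proof. by move=> Hf Hy Ha Hb; have := mono Hf Hy (ltnW Ha) Hb; lia. Qed.

(* Standardization *)
Definition keylt (f : nat * nat -> nat) y x :=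
  (f y < f x) || ((f y == f x) && (y.2 < x.2)).

Lemma keylt_total f x y : ssyt f -> incell x -> incell y -> x != y ->
  keylt f x y || keylt f y x.
Proof.
move=> Hf Hx Hy; rewrite /keylt.
case: (ltngtP (f x) (f y)) => // E; rewrite ?orbT //= ?E ?eqxx /=.
case: (ltngtP x.2 y.2) => // Ec; rewrite ?orbT // => Hne.
case: x y Hx Hy Hne E Ec => [a b] [a' b'] /= Hx Hy Hne E Ec; subst b'.
case: (ltngtP a a') => Ea.
- by have := @mono_lt f (a, b) (a', b) Hf Hy Ea (leqnn _); rewrite E ltnn.
- by have := @mono_lt f (a', b) (a, b) Hf Hx Ea (leqnn _); rewrite E ltnn.
- by subst; rewrite eqxx in Hne.
Qed.

Lemma keylt_trans f x y z : keylt f x y -> keylt f y z -> keylt f x z.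
Proof.
rewrite /keylt => /orP [H1|/andP [/eqP H1 H2]] /orP [H3|/andP [/eqP H3 H4]]; apply/orP;
  [left|left|left|right]; rewrite ?H1 ?H3 ?eqxx /=; lia.
Qed.

Lemma keylt_irr f x : keylt f x x = false.
Proof. by rewrite /keylt !ltnn andbF. Qed.

Lemma keylt_asym f x y : keylt f x y -> keylt f y x = false.
Proof.
rewrite /keylt => /orP [H1|/andP [/eqP H1 H2]]; apply/negP => /orP [H3|/andP [/eqP H3 H4]]; lia.
Qed.

Definition rank f x := count (fun y => keylt f y x) cells.
Definition std f x := (rank f x).+1.

Lemma rank_lt f x y : incell y -> keylt f y x -> rank f y < rank f x.
Proof.
move=> Hy Hyx; apply: count_lt_in.
  by move=> w _ Hw; apply: keylt_trans Hw Hyx.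
by exists y; rewrite ?mem_cells // Hyx keylt_irr.
Qed.


Lemma rank_ltn f x : incell x -> rank f x < n.
Proof.
move=> Hx; rewrite -size_cells -count_predT; apply: count_lt_in => //.
by exists x; rewrite ?mem_cells // keylt_irr.
Qed.

Lemma rank_inj f : ssyt f -> {in incell &, injective (rank f)}.
Proof.
move=> Hf x y Hx Hy E; apply/eqP; apply/negPn/negP => Hne.
case/orP: (keylt_total Hf Hx Hy Hne) => H.
  by have := rank_lt Hx H; rewrite E ltnn.
by have := rank_lt Hy H; rewrite E ltnn.
Qed.

Lemma std_ssyt f : ssyt f -> ssyt (std f).
Proof.
move=> Hf; split => //.
  move=> r c Hc; apply: ltnW; rewrite ltnS; apply: rank_lt.
    exact: incell_left Hc (leqnSn c).
  case: Hf => _ Hrow _; rewrite /keylt /=.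
  by have := Hrow _ _ Hc; rewrite leq_eqVlt => /orP [/eqP -> | ->]; rewrite ?eqxx ?ltnSn ?orbT.
move=> r c Hc; rewrite ltnS; apply: rank_lt.
  exact: incell_down Hc (leqnSn r).
by case: Hf => _ _ Hcol; rewrite /keylt Hcol.
Qed.

Lemma std_perm f : ssyt f -> perm_eq (map (std f) cells) (iota 1 n).
Proof.
move=> Hf.
have -> : map (std f) cells = map succn (map (rank f) cells) by rewrite -map_comp.
have -> : iota 1 n = map succn (iota 0 n) by rewrite (iotaDl 1 0).
apply: perm_map.
have U : uniq (map (rank f) cells).
  rewrite map_inj_in_uniq ?uniq_cells // => x y; rewrite !mem_cells; exact: rank_inj.
apply: uniq_perm => //; first exact: iota_uniq.
have Hsub : {subset map (rank f) cells <= iota 0 n}.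
  move=> k /mapP [x]; rewrite mem_cells => Hx ->; rewrite mem_iota /=; exact: rank_ltn.
have Hsz : size (iota 0 n) <= size (map (rank f) cells).
  by rewrite size_map size_cells size_iota.
by have [_ E] := uniq_min_size U Hsub Hsz.
Qed.

Definition syt (f : nat * nat -> nat) := ssyt f /\ perm_eq (map f cells) (iota 1 n).

Lemma std_syt f : ssyt f -> syt (std f).
Proof. by move=> Hf; split; [exact: std_ssyt | exact: std_perm]. Qed.

Definition qy (f : nat * nat -> nat) :=
  forall i, 1 < i -> (exists2 x, incell x & f x = i) ->
  exists x, [/\ incell x, f x = i,
     (forall y, incell y -> f y = i -> x.2 <= y.2) &
     exists2 y, incell y & f y = i.-1 /\ x.2 <= y.2].

Section SYT.
Variable S : nat * nat -> nat.
Hypothesis HS : syt S.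

Lemma S_inj : {in incell &, injective S}.
Proof.
move=> x y Hx Hy; apply: (@uniq_map_inj _ _ S cells); rewrite ?mem_cells //.
by case: HS => _ /perm_uniq ->; exact: iota_uniq.
Qed.

Lemma S_range x : incell x -> 0 < S x <= n.
Proof.
move=> Hx; case: HS => _ /perm_mem /(_ (S x)).
rewrite map_f ?mem_cells // mem_iota => /esym; lia.
Qed.

Lemma S_surj v : 0 < v <= n -> exists2 x, incell x & S x = v.
Proof.
move=> Hv; case: HS => _ /perm_mem /(_ v).
have -> : v \in iota 1 n by rewrite mem_iota; lia.
by move=> /mapP [x]; rewrite mem_cells => Hx ->; exists x.
Qed.

Lemma count_S_lt v : v <= n.+1 -> count (fun y => S y < v) cells = v.-1.
Proof.
move=> Hv; case: HS => _ /permP /(_ (fun j => j < v)).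
rewrite count_map => ->; rewrite count_iota_lt; lia.
Qed.

Lemma S_lt x y : incell y -> x.1 <= y.1 -> x.2 <= y.2 -> x != y -> S x < S y.
Proof.
move=> Hy H1 H2 Hne; have Hx : incell x.
  by case: x H1 H2 Hne => a b /= H1 H2 _; apply: incell_left (incell_down Hy H1) H2.
rewrite ltn_neqAle (mono_le HS.1 Hy H1 H2) andbT.
by apply/negP => /eqP E; move: Hne; rewrite (S_inj Hx Hy E) eqxx.
Qed.

Lemma factA_des x y : incell x -> incell y -> S y = (S x).+1 -> x.1 < y.1 -> y.2 <= x.2.
Proof.
move=> Hx Hy E H1; rewrite leqNgt; apply/negP => H2.
have Hc : incell (x.1, y.2) by case: y Hy H1 H2 E => a b /= Hy H1 H2 E; exact: incell_down Hy (ltnW H1).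
have L1 : S x < S (x.1, y.2).
  apply: S_lt => //=; first exact: ltnW.
  by apply/negP => /eqP E'; move: H2; rewrite {1}E' /= ltnn.
have L2 : S (x.1, y.2) < S y.
  by case: y Hy H1 H2 E {Hc L1} => a b /= Hy H1 H2 E; apply: (@mono_lt S (x.1, b) (a, b)) => //; case: HS.
lia.
Qed.

Lemma factA_nondes x y : incell x -> incell y -> S y = (S x).+1 -> y.1 <= x.1 -> x.2 < y.2.
Proof.
move=> Hx Hy E H1; rewrite ltnNge; apply/negP => H2.
have Hne : y != x by apply/negP => /eqP Exy; move: E; rewrite Exy; lia.
have := S_lt Hx H1 H2 Hne; lia.
Qed.

Definition des y := has (fun z => (S z == (S y).+1) && (y.1 < z.1)) cells.
Definition cnt v := count (fun y => (S y < v) && des y) cells.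
Definition gF x := (cnt (S x)).+1.

Lemma des_iff y z : incell y -> incell z -> S z = (S y).+1 -> des y = (y.1 < z.1).
Proof.
move=> Hy Hz E; apply/hasP/idP.
  case=> z'; rewrite mem_cells => Hz' /andP [/eqP E' H].
  have Ez : z' = z by apply: S_inj => //; rewrite E E'.
  by rewrite -Ez.
by move=> H; exists z; rewrite ?mem_cells // E eqxx H.
Qed.


Lemma cnt_succ y : incell y -> cnt (S y).+1 = cnt (S y) + des y.
Proof.
move=> Hy; rewrite /cnt.
have -> : count (fun w => (S w < (S y).+1) && des w) cells =
  count (fun w => (S w < S y) && des w) cells + count (fun w => (w == y) && des w) cells.
  rewrite -count_predUI.
  have -> : count (predI (fun w => (S w < S y) && des w) (fun w => (w == y) && des w)) cells = 0.
    by apply/eqP; rewrite -leqn0 -(count_pred0 cells); apply: count_le_in => w _ /=;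
       case: (eqVneq w y) => [->|]; rewrite ?ltnn ?andbF.
  rewrite addn0; apply: eq_in_count => w; rewrite mem_cells => Hw /=.
  case: (eqVneq w y) => [->|Hne]; first by rewrite ltnSn ltnn.
  rewrite ltnS leq_eqVlt; case: (S w =P S y) => [E|] /=; last by rewrite orbF.
  by move: Hne; rewrite (S_inj Hw Hy E) eqxx.
congr (_ + _).
rewrite (eq_in_count (a2 := fun w => (w == y) && des y)); last first.
  by move=> w _ /=; case: (eqVneq w y) => [->|].
case: (des y); last by rewrite (eq_count (a2 := pred0)) ?count_pred0 // => w; rewrite andbF.
rewrite (eq_count (a2 := pred1 y)) ?count_uniq_mem ?uniq_cells ?mem_cells ?Hy // => w.
by rewrite andbT.
Qed.

Lemma cnt_mono v w : v <= w -> cnt v <= cnt w.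
Proof. by move=> H; apply: count_le_in => u _ /andP [H1 ->]; rewrite andbT (leq_trans H1 H). Qed.

Lemma cnt_le v : cnt v <= count (fun y => S y < v) cells.
Proof. by apply: count_le_in => u _ /andP []. Qed.

Lemma cnt_gap u v w : incell u -> v <= S u -> S u < w -> des u -> cnt v < cnt w.
Proof.
move=> Hu H1 H2 Hd; apply: count_lt_in.
  by move=> x _ /andP [Hx ->]; rewrite andbT (leq_trans Hx (ltnW (leq_ltn_trans H1 H2))).
by exists u; rewrite ?mem_cells // H2 Hd !andbT /= ltnNge H1.
Qed.

Lemma lemmaB y z : incell y -> incell z -> S y < S z ->
  (forall u, incell u -> S y <= S u -> S u < S z -> ~~ des u) -> y.2 < z.2.
Proof.
move=> Hy Hz Hlt.
have [k Ek] : exists k, S z = S y + k.+1 by exists (S z - S y).-1; lia.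
elim: k z Hz Hlt Ek => [|k IH] z Hz Hlt Ek Hnd.
  have Hd := Hnd y Hy (leqnn _) Hlt.
  have E1 : S z = (S y).+1 by lia.
  rewrite (des_iff Hy Hz E1) -leqNgt in Hd.
  exact: factA_nondes Hy Hz E1 Hd.
have [w Hw Ew] : exists2 w, incell w & S w = S y + k.+1.
  apply: S_surj; have := S_range Hz; lia.
have H1 : y.2 < w.2.
  apply: IH => //; first lia.
  by move=> u Hu Hu1 Hu2; apply: Hnd => //; lia.
have Hd := Hnd w Hw ltac:(lia) ltac:(lia).
have E1 : S z = (S w).+1 by lia.
rewrite (des_iff Hw Hz E1) -leqNgt in Hd.
by have := factA_nondes Hw Hz E1 Hd; lia.
Qed.

Lemma nodes_of_cnt y x : cnt (S y) = cnt (S x) ->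
  forall u, incell u -> S y <= S u -> S u < S x -> ~~ des u.
Proof.
move=> E u Hu H1 H2; apply/negP => Hd.
by have := cnt_gap Hu H1 H2 Hd; rewrite E ltnn.
Qed.

Lemma F_ssyt : ssyt gF.
Proof.
split => //.
  move=> r c Hc; rewrite /gF ltnS; apply: cnt_mono; apply: ltnW; apply: S_lt => //=.
  by apply/negP => /eqP []; lia.
move=> r c Hc; rewrite /gF ltnS.
have Hc' : incell (r, c) := incell_down Hc (leqnSn r).
have Hlt : S (r, c) < S (r.+1, c).
  by apply: S_lt => //=; apply/negP => /eqP []; lia.
rewrite ltn_neqAle cnt_mono ?andbT ?(ltnW Hlt) //; apply/negP => /eqP E.
by have := lemmaB Hc' Hc Hlt (nodes_of_cnt E); rewrite ltnn.
Qed.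

Lemma keylt_F1 y x : incell x -> incell y -> S y < S x -> keylt gF y x.
Proof.
move=> Hx Hy Hlt; rewrite /keylt /gF !ltnS eqSS.
have := cnt_mono (ltnW Hlt); rewrite leq_eqVlt => /orP [/eqP E|->] //.
by rewrite E eqxx ltnn /=; exact: lemmaB Hy Hx Hlt (nodes_of_cnt E).
Qed.

Lemma keylt_F y x : incell x -> incell y -> keylt gF y x = (S y < S x).
Proof.
move=> Hx Hy; apply/idP/idP; last exact: keylt_F1.
case: (ltngtP (S y) (S x)) => // [Hgt | Heq] H.
  by have := keylt_F1 Hy Hx Hgt; rewrite (keylt_asym H).
by move: H; rewrite (S_inj Hy Hx Heq) keylt_irr.
Qed.

Lemma std_F : {in incell, std gF =1 S}.
Proof.
move=> x Hx; rewrite /std /rank.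
rewrite (eq_in_count (a2 := fun y => S y < S x)); last first.
  by move=> y; rewrite mem_cells => Hy; exact: keylt_F Hx Hy.
rewrite count_S_lt; have := S_range Hx; lia.
Qed.


Lemma F_bound x : incell x -> gF x <= (n - head 0 la).+1.
Proof.
move=> Hx; rewrite /gF ltnS -count_upper.
apply: leq_trans (count_le_in (b := des) _) _; first by move=> u _ /andP [].
rewrite -!size_filter.
have -> : size (filter des cells) = size (map (fun y => (S y).+1) (filter des cells)).
  by rewrite size_map.
apply: leq_trans (_ : size (map S (filter (fun z => 0 < z.1) cells)) <= _); last by rewrite size_map.
apply: uniq_leq_size.
  rewrite map_inj_in_uniq ?filter_uniq ?uniq_cells //.
  move=> a b; rewrite !mem_filter !mem_cells => /andP [_ Ha] /andP [_ Hb] [E].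
  exact: S_inj.
move=> v /mapP [y]; rewrite mem_filter mem_cells => /andP [/hasP [z Hz /andP [/eqP Ez Hyz]] Hy] ->.
by rewrite -Ez; apply: map_f; rewrite mem_filter Hz andbT; apply: leq_ltn_trans Hyz.
Qed.

Lemma F_qy : qy gF.
Proof.
move=> i Hi [x0 Hx0 Ex0].
have HP : exists k, has (fun z => (S z == k) && (gF z == i)) cells.
  by exists (S x0); apply/hasP; exists x0; rewrite ?mem_cells // eqxx Ex0 eqxx.
case: (ex_minnP HP) => k /hasP [z Hzc /andP [/eqP Ezk /eqP Ezi]] Hmin.
rewrite mem_cells in Hzc.
exists z; split => //.
  move=> w Hw Ew.
  have Hk : S z <= S w.
    by rewrite Ezk; apply: Hmin; apply/hasP; exists w; rewrite ?mem_cells // eqxx Ew eqxx.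
  case: (eqVneq w z) => [-> //|Hne].
  have Hlt : S z < S w.
    rewrite ltn_neqAle Hk andbT; apply/negP => /eqP E.
    by move: Hne; rewrite (S_inj Hw Hzc (esym E)) eqxx.
  apply: ltnW; apply: lemmaB => //; apply: nodes_of_cnt.
  by move: Ezi Ew; rewrite /gF => E1 E2; lia.
have Hpos : 0 < cnt (S z) by move: Ezi; rewrite /gF; lia.
have Hz2 : 1 < S z.
  have := cnt_le (S z); rewrite count_S_lt; first lia.
  by have := S_range Hzc; lia.
have [y Hy Ey] : exists2 y, incell y & S y = (S z).-1.
  by apply: S_surj; have := S_range Hzc; lia.
have Ezy : S z = (S y).+1 by lia.
have Hc := cnt_succ Hy; rewrite -Ezy in Hc.
have Hd : des y.
  apply/negPn/negP => Hnd.
  have : k <= S y.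
    apply: Hmin; apply/hasP; exists y; rewrite ?mem_cells // eqxx /=.
    by rewrite /gF -Ezi /gF Hc (negbTE Hnd) addn0.
  lia.
exists y; first exact: Hy.
split.
  by rewrite -Ezi /gF Hc Hd addn1.
have H1 : y.1 < z.1 by rewrite -(des_iff Hy Hzc Ezy).
exact: factA_des Hy Hzc Ezy H1.
Qed.

End SYT.


Section QYT.
Variable T : nat * nat -> nat.
Hypothesis HT : ssyt T.
Hypothesis HQ : qy T.
Local Notation S := (std T).

Lemma keylt_of_rank x y : incell x -> incell y -> rank T y < rank T x -> keylt T y x.
Proof.
move=> Hx Hy H; case: (eqVneq y x) => [E|Hne]; first by move: H; rewrite E ltnn.
case/orP: (keylt_total HT Hy Hx Hne) => // H'.
by have := rank_lt Hx H'; lia.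
Qed.

Lemma F_std : {in incell, gF S =1 T}.
Proof.
have HS := std_syt HT.
suff H : forall k x, incell x -> S x = k.+1 -> gF S x = T x.
  by move=> x Hx; apply: (H (rank T x)).
elim=> [|k IH] x Hx Ex.
  have Hr : rank T x = 0 by move: Ex; rewrite /std => [[]].
  have -> : gF S x = 1.
    rewrite /gF Ex; apply/eqP; rewrite eqSS -leqn0.
    by apply: leq_trans (cnt_le S 1) _; rewrite (count_S_lt HS).
  case: HT => Hpos _ _; have := Hpos x Hx.
  rewrite leq_eqVlt => /orP [/eqP -> // | H1].
  have [x0 [_ _ _ [y Hy [Ey _]]]] := HQ H1 (ex_intro2 _ _ x Hx erefl).
  have : keylt T y x by rewrite /keylt Ey; apply/orP; left; lia.
  by move/(rank_lt Hy); rewrite Hr.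
have [y Hy Ey] : exists2 y, incell y & S y = k.+1.
  by apply: (S_surj HS); have := S_range HS Hx; lia.
have IHy := IH y Hy Ey.
have Exy : S x = (S y).+1 by rewrite Ex Ey.
have Hg : gF S x = gF S y + des S y by rewrite /gF Exy (cnt_succ HS Hy).
have Hrk : rank T x = (rank T y).+1 by move: Exy; rewrite /std => [[]].
have Hyx : keylt T y x by apply: keylt_of_rank => //; rewrite Hrk.
have Hnb : forall u, incell u -> keylt T y u -> keylt T u x -> False.
  move=> u Hu H1 H2; have := rank_lt Hu H2; have := rank_lt Hy H1; lia.
case/orP: (Hyx) => [Hlt | /andP [/eqP Heq Hc]].
-
  have Hi : 1 < T x by case: HT => Hpos _ _; have := Hpos y Hy; lia.
  have [x0 [Hx0 Ex0 Hmin [w Hw [Ew Hcw]]]] := HQ Hi (ex_intro2 _ _ x Hx erefl).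
  have Ewy : T w = T y.
    case: (ltnP (T y) (T w)) => H; last lia.
    exfalso; apply: (Hnb w Hw); rewrite /keylt ?H //.
    by apply/orP; left; lia.
  have Hzx0 : x.2 <= x0.2.
    rewrite leqNgt; apply/negP => H; apply: (Hnb x0 Hx0).
      by rewrite /keylt Ex0 Hlt.
    by rewrite /keylt Ex0 eqxx H orbT.
  have Hwy : w.2 <= y.2.
    rewrite leqNgt; apply/negP => H; apply: (Hnb w Hw).
      by rewrite /keylt Ewy eqxx H orbT.
    by rewrite /keylt Ewy Hlt.
  have Hrow : y.1 < x.1.
    rewrite ltnNge; apply/negP => H.
    have := mono_le HT Hy H (leq_trans Hzx0 (leq_trans Hcw Hwy)); lia.
  rewrite Hg (des_iff HS Hy Hx Exy) Hrow IHy; lia.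
-
  have Hd : des S y = false.
    rewrite (des_iff HS Hy Hx Exy); apply/negP => Hr.
    have Hc' : incell (y.1, x.2) := @incell_down x.1 y.1 x.2 Hx (ltnW Hr).
    have L1 : T y <= T (y.1, x.2) by apply: mono_le HT Hc' _ _ => //=; exact: ltnW.
    have L2 : T (y.1, x.2) < T x.
      exact: (@mono_lt T (y.1, x.2) x HT Hx Hr (leqnn _)).
    lia.
  by rewrite Hg Hd addn0 IHy.
Qed.

End QYT.

End Core.

Section Conv.
Variable la : seq nat.
Hypothesis Hla : is_partition la.

Lemma box_mk f r c : is_box (mk la f) r c <-> incell la (r, c).
Proof. exact: shape_box (shape_mk la f). Qed.

Lemma entry_mk f r c : incell la (r, c) -> entry (mk la f) r c = f (r, c).
Proof. exact: (@ent_mk la f (r, c)). Qed.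

Lemma SSYT_mk f : is_SSYT la (mk la f) <-> ssyt la f.
Proof.
split.
  case=> _ Hp Hr Hc; split.
  - move=> [r c] H; rewrite -(entry_mk f H); apply: Hp; exact/box_mk.
  - move=> r c H; have H' : incell la (r, c) by apply: incell_left H (leqnSn c).
    by rewrite -(entry_mk f H) -(entry_mk f H'); apply: Hr; exact/box_mk.
  - move=> r c H; have H' : incell la (r, c) by exact: (@incell_down la Hla r.+1 r c H (leqnSn r)).
    by rewrite -(entry_mk f H) -(entry_mk f H'); apply: Hc; exact/box_mk.
case=> Hp Hr Hc; split; first exact: shape_mk.
- move=> r c /box_mk H; rewrite (entry_mk f H); exact: Hp.
- move=> r c /box_mk H; have H' : incell la (r, c) by apply: incell_left H (leqnSn c).
  by rewrite (entry_mk f H) (entry_mk f H'); apply: Hr.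
- move=> r c /box_mk H; have H' : incell la (r, c) by exact: (@incell_down la Hla r.+1 r c H (leqnSn r)).
  by rewrite (entry_mk f H) (entry_mk f H'); apply: Hc.
Qed.

Lemma SYT_mk f : is_SYT la (mk la f) <-> syt la f.
Proof.
rewrite /is_SYT /syt flatten_mk.
split; case=> H1 H2; split => //; exact/SSYT_mk.
Qed.

Lemma QY_mk f : is_quasi_yamanouchi (mk la f) <-> qy la f.
Proof.
split.
  move=> H i Hi [[a b] Hx Ex].
  have [r [c [/box_mk Hb Hv Hmin [r' [c' [/box_mk Hb' Hv' Hc']]]]]] :
     exists r c, [/\ is_box (mk la f) r c, entry (mk la f) r c = i,
          (forall r2 c2, is_box (mk la f) r2 c2 -> entry (mk la f) r2 c2 = i -> c <= c2) &
          exists r' c', [/\ is_box (mk la f) r' c', entry (mk la f) r' c' = i.-1 & c <= c']].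
    apply: H => //; exists a, b; split; first exact/box_mk.
    by rewrite entry_mk.
  exists (r, c); split => //.
  - by rewrite -entry_mk.
  - move=> [r2 c2] Hy Ey; apply: (Hmin r2 c2); first exact/box_mk.
    by rewrite entry_mk.
  - by exists (r', c') => //; rewrite -entry_mk.
move=> H i Hi [r [c [/box_mk Hb Hv]]].
have [[a b] [Hx Ex Hmin [[a' b'] Hy [Ey Hxy]]]] := H i Hi (ex_intro2 _ _ (r, c) Hb (etrans (esym (entry_mk f Hb)) Hv)).
exists a, b; split.
- exact/box_mk.
- by rewrite entry_mk.
- move=> r2 c2 /box_mk H2 E2; apply: (Hmin (r2, c2) H2).
  by rewrite -entry_mk.
- exists a', b'; split => //; first exact/box_mk.
  by rewrite entry_mk.
Qed.

Lemma std_eq f1 f2 : {in incell la, f1 =1 f2} -> {in incell la, std la f1 =1 std la f2}.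
Proof.
move=> E x Hx; rewrite /std /rank; congr S.
apply: eq_in_count => y; rewrite mem_cells => Hy.
by rewrite /keylt !E.
Qed.

Lemma gF_eq f1 f2 : {in incell la, f1 =1 f2} -> {in incell la, gF la f1 =1 gF la f2}.
Proof.
move=> E x Hx; rewrite /gF /cnt; congr S; rewrite E //.
apply: eq_in_count => y; rewrite mem_cells => Hy /=; rewrite E //; congr andb.
apply: eq_in_has => z; rewrite mem_cells => Hz; by rewrite !E.
Qed.

End Conv.

Lemma sig_eq (P : tableau -> Prop) (a b : {T | P T}) : proj1_sig a = proj1_sig b -> a = b.
Proof.
case: a => a Ha; case: b => b Hb /= E; subst b.
by rewrite (proof_irrelevance _ Ha Hb).
Qed.

Lemma fwd_ok la m T : is_partition la -> is_QYT_le m la T ->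
  is_SYT la (mk la (std la (ent T))).
Proof.
move=> Hla [HS _ _]; have Hsh : has_shape la T by case: HS.
rewrite -(mk_ent Hsh) in HS.
apply/(SYT_mk Hla); exact: (std_syt Hla (proj1 (SSYT_mk Hla _) HS)).
Qed.

Lemma head_le la : head 0 la <= sumn la.
Proof. by case: la => //= a l; lia. Qed.

Lemma bwd_ok la m T : is_partition la -> (sumn la).+1 <= m + head 0 la ->
  is_SYT la T -> is_QYT_le m la (mk la (gF la (ent T))).
Proof.
move=> Hla Hm HT; have Hsh : has_shape la T by case: HT => [[]].
rewrite -(mk_ent Hsh) in HT; move/(SYT_mk Hla): HT => HS.
split.
- apply/(SSYT_mk Hla); exact: F_ssyt.
- apply/QY_mk; exact: F_qy.
- move=> r c /box_mk Hb; rewrite entry_mk //.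
  have := F_bound HS Hb; have := head_le la; lia.
Qed.

Theorem proposition3p2 (la : seq nat) (m : nat) :
  is_partition la ->
  (sumn la).+1 <= m + head 0 la ->
  exists f : {T : tableau | is_QYT_le m la T} -> {T : tableau | is_SYT la T},
    bijective f.
Proof.
move=> Hla Hm.
pose f (T : {T : tableau | is_QYT_le m la T}) : {T : tableau | is_SYT la T} :=
  exist _ _ (fwd_ok Hla (proj2_sig T)).
pose g (T : {T : tableau | is_SYT la T}) : {T : tableau | is_QYT_le m la T} :=
  exist _ _ (bwd_ok Hla Hm (proj2_sig T)).
exists f; exists g.
- case=> T HT; apply: sig_eq => /=.
  have [HS HQ _] := HT; have Hsh : has_shape la T by case: HS.
  rewrite -{2}(mk_ent Hsh); apply: mk_eq => x Hx.
  rewrite (gF_eq (f2 := std la (ent T))) //; last first.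
    by move=> y Hy; rewrite ent_mk.
  rewrite -(mk_ent Hsh) in HS HQ.
  apply: F_std => //; [exact/(SSYT_mk Hla) | exact/QY_mk].
- case=> T HT; apply: sig_eq => /=.
  have Hsh : has_shape la T by case: HT => [[]].
  rewrite -{2}(mk_ent Hsh); apply: mk_eq => x Hx.
  rewrite (std_eq (f2 := gF la (ent T))) //; last first.
    by move=> y Hy; rewrite ent_mk.
  rewrite -(mk_ent Hsh) in HT; move/(SYT_mk Hla): HT => HS.
  exact: std_F.
Qed.
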